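(* Let $D=(N,A)$, $\mathcal{K}$, $\{D^k\}_{k\in\mathcal{K}}$ be an instance of SND-RR, let $\mathcal{A}=\{\mathcal{A}_v\}_{v\in N}$ be a valid arc partition for it, and let $G=G(D,\mathcal{A})$ be the auxiliary flat network. Then for each commodity $k\in\mathcal{K}$, the subgraph $G^k$ has the same number of nodes and the same number of arcs as $D^k$.
   Context: An instance of SND-RR has a directed graph $D=(N,A)$, a set $\mathcal{K}$ of commodities each with origin $o_k\in N$ and destination $d_k\in N$, and for each $k$ a subgraph $D^k=(N^k,A^k)\subseteq D$. Standing assumption: for each $k$, $\delta^+_{D^k}(d_k)=\emptyset$, and $\delta^+_{D^k}(v)\neq\emptyset$ for every $v\in N^k\setminus\{d_k\}$ (where $\delta^+_H(v)$ denotes the arcs of $H$ leaving $v$). A partition $\mathcal{A}=\{\mathcal{A}_v\}_{v\in N}$ is valid if for each $v\in N$, $\mathcal{A}_v=\{A_1,\dots,A_r\}$ is a partition of $\delta^+_D(v)$, and for each $k\in\mathcal{K}$ there is $A_i\in\mathcal{A}_v$ with $\delta^+_{D^k}(v)\subseteq A_i$. For each $v\in N$ let $\mathcal{V}(v)=\{v^0,v^1,\dots,v^{|\mathcal{A}_v|}\}$: a copy $v^i$ for each part $A_i\in\mathcal{A}_v$ plus a terminal copy $v^0$. The auxiliary flat network $G=G(D,\mathcal{A})=(V,E)$ has $V=\bigcup_{v\in N}\mathcal{V}(v)$ and $E=\{v^iw^j: vw\in A_i\in\mathcal{A}_v,\ w^j\in\mathcal{V}(w)\}$. For $v\in N$ and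 $A_i\in\mathcal{A}_v$ let $\mathcal{K}(A_i)=\{k\in\mathcal{K}:\emptyset\neq\delta^+_{D^k}(v)\subseteq A_i\}$. For $k\in\mathcal{K}$, $G^k=(V^k,E^k)$ where $V^k=\{v^i: v\in N^k, A_i\in\mathcal{A}_v, k\in\mathcal{K}(A_i)\}\cup\{d_k^0\}$ and $E^k=\{v^iw^j: vw\in A^k, v^i\in V^k, w^j\in V^k\}$. *)

(* Defs.v *)
From mathcomp Require Import all_boot.
Set Implicit Arguments. Unset Strict Implicit. Unset Printing Implicit Defensive.

Definition outarcs (N : finType) (H : {set N * N}) (v : N) : {set N * N} :=
  [set a in H | a.1 == v].

Definition SNDRR_instance (N K : finType) (A : {set N * N}) (o d : K -> N)
    (Nk : K -> {set N}) (Ak : K -> {set N * N}) : Prop :=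
  forall k : K,
    [/\ Ak k \subset A,
        (forall a, a \in Ak k -> (a.1 \in Nk k) && (a.2 \in Nk k)),
        (o k \in Nk k) && (d k \in Nk k),
        outarcs (Ak k) (d k) = set0 &
        forall v, v \in Nk k -> v != d k -> outarcs (Ak k) v != set0].

Definition valid_partition (N K : finType) (A : {set N * N})
    (Ak : K -> {set N * N}) (Pv : N -> {set {set N * N}}) : Prop :=
  forall v : N,
    partition (Pv v) (outarcs A v) /\
    forall k : K, outarcs (Ak k) v != set0 ->
      exists2 Ai, Ai \in Pv v & outarcs (Ak k) v \subset Ai.

(* Copies of a node v: (v, None) is the terminal copy v^0, (v, Some Ai) is the
   copy v^i associated with the part Ai of A_v. *)
Definition copy (N : finType) := (N * option {set N * N})%type.

Definition auxV (N : finType) (Pv : N -> {set {set N * N}}) : {set copy N} :=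
  [set x : copy N | if x.2 is Some Ai then Ai \in Pv x.1 else true].

Definition auxE (N : finType) (Pv : N -> {set {set N * N}})
    : {set copy N * copy N} :=
  [set e : copy N * copy N |
    [&& e.1 \in auxV Pv, e.2 \in auxV Pv &
        if e.1.2 is Some Ai then (e.1.1, e.2.1) \in Ai else false]].

Definition inK (N : finType) (Hk : {set N * N}) (v : N) (Ai : {set N * N})
    : bool :=
  (outarcs Hk v != set0) && (outarcs Hk v \subset Ai).

Definition Vk (N K : finType) (d : K -> N) (Nk : K -> {set N})
    (Ak : K -> {set N * N}) (Pv : N -> {set {set N * N}}) (k : K)
    : {set copy N} :=
  [set x : copy N | (x.1 \in Nk k) &&
     (if x.2 is Some Ai then (Ai \in Pv x.1) && inK (Ak k) x.1 Ai else false)]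
  :|: [set (d k, None)].

Definition Ek (N K : finType) (d : K -> N) (Nk : K -> {set N})
    (Ak : K -> {set N * N}) (Pv : N -> {set {set N * N}}) (k : K)
    : {set copy N * copy N} :=
  [set e : copy N * copy N |
    [&& (e.1.1, e.2.1) \in Ak k, e.1 \in Vk d Nk Ak Pv k &
        e.2 \in Vk d Nk Ak Pv k]].

(* Main.v *)
Require Import Defs.
From mathcomp Require Import all_boot.

Theorem lemma1 (N K : finType) (A : {set N * N}) (o d : K -> N)
    (Nk : K -> {set N}) (Ak : K -> {set N * N})
    (Pv : N -> {set {set N * N}}) :
  SNDRR_instance A o d Nk Ak ->
  valid_partition A Ak Pv ->
  forall k : K,
    #|Vk d Nk Ak Pv k| = #|Nk k| /\ #|Ek d Nk Ak Pv k| = #|Ak k|.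
Proof.
move=> HI HP k.
have [sub HAkN /andP[_ dN] Hd Hout] := HI k.
set V := Vk d Nk Ak Pv k.
have memV : forall x, x \in V = ((x.1 \in Nk k) &&
     (if x.2 is Some Ai then (Ai \in Pv x.1) && inK (Ak k) x.1 Ai else false))
   || (x == (d k, None)).
  by move=> x; rewrite /V /Vk in_setU in_set in_set1.
have Vfst : forall x, x \in V -> x.1 \in Nk k.
  move=> [v [Ai|]]; rewrite memV /=.
    by case/orP => [/andP[]//|/eqP[]].
  by case/orP => [/andP[]//|/eqP[->]].
have Vsurj : forall v, v \in Nk k -> exists2 x, x \in V & x.1 = v.
  move=> v vN; case: (eqVneq v (d k)) => [->|vd].
    by exists (d k, None) => //; rewrite memV eqxx orbT.
  have [Ai AiP sAi] := (HP v).2 k (Hout v vN vd).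
  exists (v, Some Ai) => //; rewrite memV /= vN AiP /inK sAi Hout //.
have Vinj : {in V &, injective (fun x : copy N => x.1)}.
  have key : forall v Ai, (v, Some Ai) \in V -> v = d k -> False.
    move=> v Ai; rewrite memV /= => /orP[|/eqP//] /andP[_ /andP[_ /andP[]]] + _ dv.
    by rewrite dv Hd eqxx.
  move=> [v [Ai|]] [w [Aj|]] /= Hx Hy vw; subst w.
  - move: Hx Hy; rewrite !memV /= => /orP[|/eqP//] + /orP[|/eqP//].
    move=> /andP[_ /andP[AiP /andP[ne sAi]]] /andP[_ /andP[AjP /andP[_ sAj]]].
    have [a aO] := set0Pn _ ne.
    have /and3P[_ triv _] := (HP v).1.
    rewrite -(def_pblock triv AiP (subsetP sAi a aO)).
    by rewrite -(def_pblock triv AjP (subsetP sAj a aO)).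
  - move: (Hy); rewrite memV /= andbF /= => /eqP[dv].
    by case: (key _ _ Hx dv).
  - move: (Hx); rewrite memV /= andbF /= => /eqP[dv].
    by case: (key _ _ Hy dv).
  - by [].
split.
  rewrite -(card_in_imset Vinj); apply: eq_card => v.
  apply/imsetP/idP => [[x xV ->]|vN]; first exact: Vfst.
  by have [x xV <-] := Vsurj v vN; exists x.
set E := Ek d Nk Ak Pv k.
have memE : forall e, e \in E = [&& (e.1.1, e.2.1) \in Ak k, e.1 \in V & e.2 \in V].
  by move=> e; rewrite /E /Ek in_set.
have Einj : {in E &, injective (fun e : copy N * copy N => (e.1.1, e.2.1))}.
  move=> [x y] [x' y']; rewrite !memE /= => /and3P[_ xV yV] /and3P[_ xV' yV'] [e1 e2].
  by rewrite (Vinj _ _ xV xV' e1) (Vinj _ _ yV yV' e2).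
rewrite -(card_in_imset Einj); apply: eq_card => a.
apply/imsetP/idP => [[e eE ->]|aA].
  by move: eE; rewrite memE => /and3P[].
have /andP[a1 a2] := HAkN a aA.
have [x xV x1] := Vsurj _ a1.
have [y yV y1] := Vsurj _ a2.
exists (x, y); last by rewrite x1 y1; case: a {aA a1 a2 x1 y1}.
by rewrite memE /= x1 y1 xV yV -surjective_pairing aA.
Qed.
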